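(* Let $\Omega$ be a discrete filtered set with upper closure $\tilde\Omega$. Then the closure $\overline{\mathcal{S}_\Omega}$ of $\mathcal{S}_\Omega$ in $\mathbb{R}\times\mathbb{C}$ equals $\mathcal{S}_{\tilde\Omega}$, and $\mathcal{M}_\Omega=\mathcal{M}_{\tilde\Omega}$.
   Context: A discrete filtered set (d.f.s.) is a family $\Omega=(\Omega_L)_{L\in\mathbb{R}_{\ge0}}$ of finite subsets of $\mathbb{C}$ with $\Omega_{L_1}\subseteq\Omega_{L_2}$ for $L_1\le L_2$ and $\Omega_\delta=\emptyset$ for some $\delta>0$. Its upper closure is $\tilde\Omega_L=\bigcap_{\varepsilon>0}\Omega_{L+\varepsilon}$ ($L\ge0$), which is again a d.f.s. For a d.f.s. $\Omega$ set $\mathcal{S}_\Omega=\{(\lambda,\omega)\in\mathbb{R}\times\mathbb{C}\mid \lambda\ge0,\ \omega\in\Omega_\lambda\}$ and $\mathcal{M}_\Omega=(\mathbb{R}\times\mathbb{C})\setminus\overline{\mathcal{S}_\Omega}$, where the bar denotes closure in $\mathbb{R}\times\mathbb{C}$. *)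

(* Defs.v *)
(* C is modelled as R * R (real and imaginary parts),
   with the product topology, which is the usual topology of C. *)
From HB Require Import structures.
From mathcomp Require Import all_boot all_order all_algebra.
From mathcomp Require Import all_classical all_reals all_analysis.
Set Implicit Arguments. Unset Strict Implicit. Unset Printing Implicit Defensive.
Import Order.TTheory GRing.Theory Num.Theory.
Import numFieldNormedType.Exports.
Local Open Scope classical_set_scope.
Local Open Scope ring_scope.

Notation cplx R := (R * R)%type.

(* A discrete filtered set: values for L < 0 are irrelevant. *)
Definition is_dfs (R : realType) (Om : R -> set (cplx R)) : Prop :=
  (forall L, 0 <= L -> finite_set (Om L)) /\
  (forall L1 L2, 0 <= L1 -> L1 <= L2 -> Om L1 `<=` Om L2) /\
  (exists delta : R, 0 < delta /\ Om delta = set0).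

Definition upper_closure (R : realType) (Om : R -> set (cplx R)) : R -> set (cplx R) :=
  fun L => \bigcap_(e in [set e : R | 0 < e]) Om (L + e).

Definition S_set (R : realType) (Om : R -> set (cplx R)) : set (R * (R * R))%type :=
  [set p | 0 <= p.1 /\ Om p.1 p.2].

Definition M_set (R : realType) (Om : R -> set (cplx R)) : set (R * (R * R))%type :=
  ~` @closure (R * (R * R))%type (S_set Om).

(* Main.v *)
Require Import Defs.
From HB Require Import structures.
From mathcomp Require Import all_boot all_order all_algebra.
From mathcomp Require Import all_classical all_reals all_analysis.
Import Order.TTheory GRing.Theory Num.Theory.
Import numFieldNormedType.Exports.
Local Open Scope classical_set_scope.
Local Open Scope ring_scope.

Lemma cl_sub (R : realType) (Om : R -> set (cplx R)) :
  is_dfs Om ->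
  @topology_structure.closure (R * (R * R))%type (S_set Om) `<=` S_set (upper_closure Om).
Proof.
move=> [fin [mono _]] [l w] cl.
have l0 : 0 <= l.
  rewrite leNgt; apply/negP => l0.
  have : nbhs (l, w) ([set x : R | x < 0] `*` [set: R * R]).
    exists ([set x : R | x < 0], [set: R * R]) => //=; split.
      exact: lt_nbhsl.
    exact: filterT.
  move=> /cl [[m v]] /= [[m0 _] [m0' _]].
  by move: (le_lt_trans m0 m0'); rewrite ltxx.
split => //= e /= e0.
apply: contrapT => Fw.
have Fc : closed (Om (l + e)).
  apply: (proj1 (@accessible_finite_set_closed (R * R)%type)).
    apply: hausdorff_accessible; exact: norm_hausdorff.
  by apply: fin; rewrite addr_ge0 // ltW.
have : nbhs (l, w) ([set x : R | x < l + e] `*` ~` Om (l + e)).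
  exists ([set x : R | x < l + e], ~` Om (l + e)) => //=; split.
    by apply: lt_nbhsl; rewrite ltrDl.
  by apply: open_nbhs_nbhs; split => //; exact: closed_openC.
move=> /cl [[m v]] /= [[m0 Omv] [mle nv]].
by apply: nv; apply: (mono m) => //; apply: ltW.
Qed.

Lemma sub_cl (R : realType) (Om : R -> set (cplx R)) :
  S_set (upper_closure Om) `<=` @topology_structure.closure (R * (R * R))%type (S_set Om).
Proof.
move=> [l w] [/= l0 hw] B /= [[A1 A2] /= [nA1 nA2] sub].
move/nbhs_ballP: nA1 => [e /= e0 be].
have e20 : 0 < e / 2 by rewrite divr_gt0.
exists (l + e / 2, w); split.
  split => /=; first by rewrite addr_ge0 // ltW.
  exact: (hw (e / 2)).
apply: sub; split => /=; last exact: nbhs_singleton.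
apply: be; rewrite /ball /= opprD addrA subrr add0r normrN gtr0_norm //.
by rewrite ltr_pdivrMr // ltr_pMr // ltr1n.
Qed.

Theorem lemma2p4 (R : realType) (Om : R -> set (cplx R)) :
  is_dfs Om ->
  @topology_structure.closure (R * (R * R))%type (S_set Om) = S_set (upper_closure Om) /\
  M_set Om = M_set (upper_closure Om).
Proof.
move=> H.
have E : @topology_structure.closure (R * (R * R))%type (S_set Om) = S_set (upper_closure Om).
  by apply/seteqP; split; [exact: cl_sub | exact: sub_cl].
split => //.
have C := @closed_closure _ (S_set Om).
rewrite /M_set -E; congr (~` _); exact: (proj1 (closure_id _) C).
Qed.
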